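(* If $A\in\mathbb{R}^{n\times n}$ is almost semimonotone, then $A$ is not a Karamardian matrix.
   Context: $A$ is semimonotone if for every $x$ with $0\ne x\ge 0$ there is an index $k$ with $x_k>0$ and $(Ax)_k\ge 0$. $A$ is almost semimonotone if every proper principal submatrix of $A$ is semimonotone but $A$ itself is not semimonotone. For $M\in\mathbb{R}^{n\times n}$ let $K_M=\mathbb{R}^n_+\cap R(M)$ and $K_M^*=\{y: x^Ty\ge 0\ \forall x\in K_M\}$ (one has $K_M^*=\mathbb{R}^n_++N(M^T)$, with interior $\{a+b: a>0,\ b\in N(M^T)\}$). For $q$, LCP$(M,K_M,q)$ is to find $x\in K_M$ with $Mx+q\in K_M^*$ and $x^T(Mx+q)=0$. $M$ is a Karamardian matrix if $K_M\ne\{0\}$ and there exists $d$ in the interior of $K_M^*$ such that both LCP$(M,K_M,0)$ and LCP$(M,K_M,d)$ have $x=0$ as their only solution. *)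

(* Defs.v *)
From HB Require Import structures.
From mathcomp Require Import all_boot all_order all_algebra.
From mathcomp Require Import reals.
Set Implicit Arguments. Unset Strict Implicit. Unset Printing Implicit Defensive.
Import Order.TTheory GRing.Theory Num.Theory.
Local Open Scope ring_scope.

Section Defs.
Variable R : realType.

Definition nonneg_vec n (x : 'cV[R]_n) : Prop := forall i, 0 <= x i 0.
Definition pos_vec n (x : 'cV[R]_n) : Prop := forall i, 0 < x i 0.

Definition semimonotone n (A : 'M[R]_n) : Prop :=
  forall x : 'cV[R]_n, nonneg_vec x -> x != 0 ->
    exists k, 0 < x k 0 /\ 0 <= (A *m x) k 0.

Definition principal_submx n (A : 'M[R]_n) (S : {set 'I_n}) : 'M[R]_#|S| :=
  \matrix_(i, j) A (enum_val i) (enum_val j).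

Definition almost_semimonotone n (A : 'M[R]_n) : Prop :=
  (forall S : {set 'I_n}, S \proper [set: 'I_n] -> semimonotone (principal_submx A S))
  /\ ~ semimonotone A.

Definition K_M n (M : 'M[R]_n) (x : 'cV[R]_n) : Prop :=
  nonneg_vec x /\ exists y : 'cV[R]_n, x = M *m y.

Definition K_M_dual n (M : 'M[R]_n) (y : 'cV[R]_n) : Prop :=
  forall x, K_M M x -> 0 <= (x^T *m y) 0 0.

(* interior of K_M^*, = { a + b : a > 0, b in N(M^T) } as stated in the paper *)
Definition K_M_dual_int n (M : 'M[R]_n) (d : 'cV[R]_n) : Prop :=
  exists a b : 'cV[R]_n, pos_vec a /\ M^T *m b = 0 /\ d = a + b.

Definition LCP_sol n (M : 'M[R]_n) (q x : 'cV[R]_n) : Prop :=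
  K_M M x /\ K_M_dual M (M *m x + q) /\ (x^T *m (M *m x + q)) 0 0 = 0.

Definition karamardian n (M : 'M[R]_n) : Prop :=
  (exists x, K_M M x /\ x != 0) /\
  exists d, K_M_dual_int M d /\
    (forall x, LCP_sol M 0 x -> x = 0) /\
    (forall x, LCP_sol M d x -> x = 0).

End Defs.

(* Main.v *)
Require Import Defs.
From HB Require Import structures.
From mathcomp Require Import all_boot all_order all_algebra.
From mathcomp Require Import reals.
From Stdlib Require Import Classical.
From mathcomp Require Import lra.
Import Order.TTheory GRing.Theory Num.Theory.
Local Open Scope ring_scope.

Section Aux.
Variable R : realType.
Variable n : nat.
Variable A : 'M[R]_n.

Lemma not_semi_witness : ~ semimonotone A ->
  exists x : 'cV[R]_n, nonneg_vec x /\ x != 0 /\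
    (forall k, 0 < x k 0 -> (A *m x) k 0 < 0).
Proof.
move=> H; apply: NNPP => H2; apply: H => x hx hx0.
apply: NNPP => H3; apply: H2; exists x; split=> //; split=> // k hk.
rewrite ltNge; apply/negP => hk2; apply: H3; by exists k.
Qed.

Hypothesis Hsub : forall S : {set 'I_n}, S \proper [set: 'I_n] ->
  semimonotone (principal_submx A S).

Lemma keyK (y : 'cV[R]_n) : nonneg_vec y -> y != 0 ->
  (forall k, 0 < y k 0 -> (A *m y) k 0 < 0) -> pos_vec y.
Proof.
move=> hy hy0 hA i; case: (ltrP 0 (y i 0)) => // hle.
have yi0 : y i 0 = 0 by apply/le_anti; rewrite hle hy.
exfalso.
pose S := [set k | 0 < y k 0].
have hS : S \proper [set: 'I_n].
  rewrite properT; apply/negP => /eqP hS.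
  have : i \in S by rewrite hS inE.
  by rewrite inE yi0 ltxx.
pose ys := \col_(k < #|S|) y (enum_val k) 0.
have hys : nonneg_vec ys by move=> k; rewrite mxE.
have hys0 : ys != 0.
  apply/negP => /eqP ys0; move/negP: hy0; apply; apply/eqP/matrixP => p q.
  rewrite ord1 mxE.
  case: (ltrP 0 (y p 0)) => hp; last by apply/le_anti; rewrite hp hy.
  have pS : p \in S by rewrite inE.
  move/matrixP: ys0 => /(_ (enum_rank_in pS p) 0).
  by rewrite !mxE enum_rankK_in.
have [k [hk1 hk2]] := @Hsub S hS ys hys hys0.
have ekS := enum_valP k.
have hyk : 0 < y (enum_val k) 0 by move: hk1; rewrite mxE.
have := hA _ hyk.
have -> : (A *m y) (enum_val k) 0 = (principal_submx A S *m ys) k 0.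
  rewrite !mxE (bigID (fun j => j \in S)) /=.
  rewrite [X in _ + X]big1 ?addr0; last first.
    move=> j; rewrite inE => hj.
    have -> : y j 0 = 0 by apply/le_anti; rewrite hy andbT leNgt.
    by rewrite mulr0.
  rewrite big_enum_val; apply: eq_bigr => j _; by rewrite !mxE.
by rewrite ltNge hk2.
Qed.


Lemma nz_idx m (y : 'cV[R]_m) : y != 0 -> exists i, y i 0 != 0.
Proof.
move=> hy; apply: NNPP => H; move/negP: hy; apply; apply/eqP/matrixP => p q.
rewrite ord1 mxE; apply/eqP; apply: NNPP => H2; apply: H; exists p; exact/negP.
Qed.

Lemma seg (x y : 'cV[R]_n) : pos_vec x -> (forall k, (A *m x) k 0 < 0) ->
  (forall k, (A *m y) k 0 < 0) -> pos_vec y.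
Proof.
move=> hx hAx hAy; apply: NNPP => hny.
have [i0 hi0] : exists i, y i 0 <= 0.
  apply: NNPP => H; apply: hny => i; apply: NNPP => H2; apply: H; exists i.
  by rewrite leNgt; apply/negP.
pose P := fun i => y i 0 < x i 0.
pose F := fun i => x i 0 / (x i 0 - y i 0).
have Pi0 : P i0 by rewrite /P; apply: le_lt_trans hi0 (hx i0).
case: (arg_minP F Pi0) => j Pj Fmin.
set t := F j.
have dj : 0 < x j 0 - y j 0 by rewrite subr_gt0.
have t0 : 0 < t by rewrite /t /F divr_gt0.
have tx : t * (x j 0 - y j 0) = x j 0 by rewrite /t /F divfK // gt_eqF.
have t1 : t <= 1.
  have := Fmin _ Pi0; rewrite -/t /F => h; apply: (le_trans h).
  have d0 : 0 < x i0 0 - y i0 0 by rewrite subr_gt0.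
  rewrite ler_pdivrMr // mul1r; lra.
pose z := x + t *: (y - x).
have zE k : z k 0 = x k 0 + t * (y k 0 - x k 0) by rewrite !mxE.
have Az : forall k, (A *m z) k 0 < 0.
  move=> k; rewrite mulmxDr -scalemxAr mulmxBr.
  move: (A *m x) (A *m y) (hAx k) (hAy k) => ax ay hax hay.
  rewrite !mxE.
  have h1 : (1 - t) * ax k 0 <= 0.
    by rewrite mulr_ge0_le0 // ?subr_ge0 // ltW.
  have h2 : t * ay k 0 < 0 by rewrite pmulr_rlt0.
  lra.
have z0 : nonneg_vec z.
  move=> k; rewrite zE; case: (ltrP (y k 0) (x k 0)) => hk.
    have hk' := Fmin _ hk; rewrite -/t /F in hk'.
    have dk : 0 < x k 0 - y k 0 by rewrite subr_gt0.
    move: hk'; rewrite ler_pdivlMr // => hk'.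
    have := hx k; nra.
  have := hx k; nra.
have zn0 : z != 0.
  apply/negP => /eqP hz; have := Az j; by rewrite hz mulmx0 mxE ltxx.
have hz := @keyK z z0 zn0 (fun k _ => Az k) j.
move: hz; rewrite zE; nra.
Qed.

End Aux.

Theorem mainTheorem15 (R : realType) (n : nat) (A : 'M[R]_n) :
  almost_semimonotone A -> ~ karamardian A.
Proof.
move=> [Hsub Hns] [_ [d [[a [b [ha [hb hd]]]] [_ Hd]]]].
have [x [hx [hx0 hAx]]] := @not_semi_witness _ _ A Hns.
have xpos : pos_vec x := @keyK _ _ A Hsub x hx hx0 hAx.
have Ax k : (A *m x) k 0 < 0 := hAx k (xpos k).
have hU : A \in unitmx.
  rewrite unitmxE unitfE; apply/negP => hdet; move: hdet.
  rewrite -det_tr; case/det0P=> v hv0 hv.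
  have hw : A *m v^T = 0 by rewrite -[A]trmxK -trmx_mul hv trmx0.
  have hw0 : v^T != 0 by rewrite trmx_eq0.
  have [i hi] := @nz_idx R _ _ hw0.
  pose y := x - ((x i 0 + 1) / v^T i 0) *: v^T.
  have Ay k : (A *m y) k 0 < 0.
    by rewrite /y mulmxBr -scalemxAr hw scaler0 subr0.
  have := @seg _ _ A Hsub x y xpos Ax Ay i.
  move: hi; rewrite /y !mxE => hi; rewrite divfK //; lra.
pose z := - (invmx A *m a).
have Az : A *m z = - a by rewrite /z mulmxN mulKVmx.
have zpos : pos_vec z.
  apply: (@seg _ _ A Hsub x z xpos Ax) => k; rewrite Az mxE oppr_lt0; exact: ha.
have zK : z = A *m (invmx A *m z) by rewrite mulKVmx.
have orth (w : 'cV[R]_n) : K_M A w -> (w^T *m b) 0 0 = 0.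
  move=> [_ [y ->]]; by rewrite trmx_mul -mulmxA hb mulmx0 mxE.
have hz : LCP_sol A d z.
  have Kz : K_M A z by split; [move=> k; exact: ltW | exists (invmx A *m z)].
  have e : A *m z + d = b by rewrite Az hd addrA addNr add0r.
  split=> //; split; rewrite e.
    by move=> w /orth ->.
  exact: orth.
have := Hd z hz.
have [i _] := @nz_idx R _ _ hx0.
move=> z0; have := zpos i; by rewrite z0 mxE ltxx.
Qed.
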